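(* Let $\mathbb{K}\in\{\mathbb{R},\mathbb{C}\}$ and $w_1,w_2\in\mathsf{GL}_d(\mathbb{K})$. Then for each $i\in\{1,2\}$, \[\frac{\sigma_1}{\sigma_2}(w_1w_2)\ge\frac{\sigma_d(w_i)^2}{\sigma_1(w_i)^2}\,\frac{\sigma_1}{\sigma_2}(w_1)\,\frac{\sigma_1}{\sigma_2}(w_2).\]
   Context: $\sigma_1(g)\ge\dots\ge\sigma_d(g)$ are the singular values of $g$, and $\frac{\sigma_i}{\sigma_j}(g)=\sigma_i(g)/\sigma_j(g)$. *)

(* Defs.v *)
From HB Require Import structures.
From mathcomp Require Import all_boot all_order all_algebra.
From mathcomp Require Import complex.
From mathcomp Require Import reals.
Set Implicit Arguments. Unset Strict Implicit. Unset Printing Implicit Defensive.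
Import Order.TTheory GRing.Theory Num.Theory.
Local Open Scope ring_scope.

(* Singular values of a square complex matrix g (over C = R[i], R real closed):
   the square roots of the eigenvalues of the Hermitian matrix g^* g, counted
   with (algebraic) multiplicity, i.e. of the roots of its characteristic
   polynomial, listed in non-increasing order.  The eigenvalues of g^* g are
   real and nonnegative; we take their real parts (as elements of R). *)
Definition adjmx (R : rcfType) (d : nat) (g : 'M[R[i]]_d) : 'M[R[i]]_d :=
  (map_mx (@conjc R) g)^T.

Definition char_roots (F : closedFieldType) (p : {poly F}) : seq F :=
  sval (closed_field_poly_normal p).

Definition singular_values (R : rcfType) (d : nat) (g : 'M[R[i]]_d) : seq R :=
  sort (fun x y : R => y <= x)
    [seq Num.sqrt (complex.Re z) | z <- char_roots (char_poly (adjmx g *m g))].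

(* sigma_k(g), 1-based index k (1 <= k <= d) *)
Definition sigmaC (R : rcfType) (d : nat) (g : 'M[R[i]]_d) (k : nat) : R :=
  nth 0 (singular_values g) k.-1.

Definition sigmaR (R : rcfType) (d : nat) (g : 'M[R]_d) (k : nat) : R :=
  sigmaC (map_mx (fun x : R => (x%:C)%C) g) k.

(* Main.v *)
Require Import Defs.
From HB Require Import structures.
From mathcomp Require Import all_boot all_order all_algebra.
From mathcomp Require Import complex.
From mathcomp Require Import reals.
From mathcomp Require Import ring.
Import Order.TTheory GRing.Theory Num.Theory.
Local Notation conjC := (@Num.conj _).
Local Open Scope ring_scope.
Set Implicit Arguments. Unset Strict Implicit. Unset Printing Implicit Defensive.

Section S.
Variable R : rcfType.
Local Notation C := (R[i]).
Local Notation "M ^t*" := (map_mx conjC (trmx M)) (at level 30).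
Local Notation dot := (@dotmx C _).

Lemma char_poly_conj n (P D : 'M[C]_n) : P \in unitmx ->
  char_poly (invmx P *m D *m P) = char_poly D.
Proof.
move=> Pu; rewrite /char_poly /char_poly_mx.
set f := (@polyC C).
have Pfu : map_mx f P \in unitmx by rewrite map_unitmx.
have Xe : ('X%:M : 'M[{poly C}]_n) = invmx (map_mx f P) *m 'X%:M *m map_mx f P.
  by rewrite mul_mx_scalar -scalemxAl mulVmx // scalemx1.
rewrite [in LHS]Xe !map_mxM map_invmx -mulmxBl -mulmxBr !det_mulmx det_inv mulrC mulrA.
by rewrite divrr ?mul1r // -unitmxE.
Qed.

Lemma adjmxE n (g : 'M[C]_n) : adjmx g = g^t*.
Proof. by rewrite /adjmx map_trmx. Qed.


Lemma quad_diag n (y : 'rV[C]_n) (l : 'rV[C]_n) :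
  (y *m diag_mx l *m y^t*) 0 0 = \sum_k l 0 k * (y 0 k * conjC (y 0 k)).
Proof.
rewrite mul_mx_diag !mxE; apply: eq_bigr => k _; rewrite !mxE.
by rewrite mulrCA mulrA.
Qed.

Lemma nonneg_real (z : C) : 0 <= z -> z = ((complex.Re z)%:C)%C.
Proof.
move=> z0; rewrite [z in LHS]complexE (ger0_Im z0) mulr0 addr0 //.
Qed.

Lemma spec n (g : 'M[C]_n) : exists P (lam : 'I_n -> R),
  [/\ P \is unitarymx, (forall j, 0 <= lam j),
   perm_eq [seq Num.sqrt (complex.Re z) | z <- char_roots (char_poly (adjmx g *m g))]
           [seq Num.sqrt (lam j) | j <- enum 'I_n] &
   forall u : 'rV_n, dot (u *m g^t*) (u *m g^t*) =
     \sum_j ((lam j)%:C)%C * ((u *m P^t*) 0 j * conjC ((u *m P^t*) 0 j))].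
Proof.
set A := adjmx g *m g.
have AE : A = g^t* *m g by rewrite /A adjmxE.
have An : A \is normalmx.
  apply/normalmxP; suff -> : A^t* = A by [].
  by rewrite AE trmx_mul map_mxM trmxCK.
have AE2 := orthomx_spectralP An.
set P := spectralmx A in AE2; set l := spectral_diag A in AE2.
have Pu : P \is unitarymx by apply: spectral_unitarymx.
rewrite invmx_unitary // in AE2.
have formE : forall u : 'rV_n, dot (u *m g^t*) (u *m g^t*) =
     \sum_j l 0 j * ((u *m P^t*) 0 j * conjC ((u *m P^t*) 0 j)).
  move=> u; rewrite dotmxE -quad_diag trmx_mul map_mxM trmxCK.
  rewrite !mulmxA -(mulmxA u) -AE AE2 !mulmxA.
  by rewrite [in RHS]trmx_mul [in RHS]map_mxM trmxCK !mulmxA.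
have lpos : forall j, 0 <= l 0 j.
  move=> j; have := formE (delta_mx (0:'I_1) j *m P).
  rewrite -[_ *m P *m P^t*]mulmxA (unitarymxP Pu) mulmx1 (bigD1 j) //= big1 ?addr0.
    by rewrite !mxE !eqxx /= conjC1 !mulr1 => <-; apply: dnorm_ge0.
  by move=> k kj; rewrite mxE eqxx /= (negbTE kj) mul0r mulr0.
exists P, (fun j => complex.Re (l 0 j)); split => //.
- move=> j; have := lpos j; rewrite lecE /= => /andP[_ ->] //.
- have cA : char_poly A = \prod_(i < n) ('X - (l 0 i)%:P).
    rewrite AE2 -invmx_unitary // char_poly_conj ?unitarymx_unit //.
    rewrite char_poly_trig ?diag_mx_is_trig //.
    by apply: eq_bigr => i _; rewrite mxE eqxx mulr1n.
  rewrite (map_comp (fun x => Num.sqrt (complex.Re x)) (fun j => l 0 j)).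
  apply: perm_map; rewrite /char_roots; case: closed_field_poly_normal => r /= rE.
  apply: prod_XsubC_eq; rewrite big_map big_enum /= -cA.
  by rewrite [in RHS]rE (monicP (char_poly_monic _)) scale1r.
- by move=> u; rewrite formE; apply: eq_bigr => j _; rewrite -nonneg_real.
Qed.


Lemma sorted_data n (mu : 'I_n -> R) (S : seq R) :
  (1 < n)%N -> perm_eq S [seq mu j | j <- enum 'I_n] ->
  sorted (fun x y : R => y <= x) S ->
  exists j1 j2, [/\ j1 != j2, nth 0 S 0 = mu j1, nth 0 S 1 = mu j2,
    (forall j, j != j1 -> mu j <= nth 0 S 1) &
    (forall j, nth 0 S n.-1 <= mu j) /\ (exists j, nth 0 S n.-1 = mu j)
    /\ nth 0 S 1 <= nth 0 S 0].
Proof.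
move=> n1 pS sS.
have n0 : (0 < n)%N by apply: ltn_trans n1.
set T := [seq mu j | j <- enum 'I_n] in pS.
have sT : size T = n by rewrite size_map size_enum_ord.
have [Is IsP SE] := perm_iotaP 0 pS.
rewrite sT in IsP.
have sIs : size Is = n by rewrite (perm_size IsP) size_iota.
have uIs : uniq Is by rewrite (perm_uniq IsP) iota_uniq.
have IsLt : forall k, (k < n)%N -> (nth 0%N Is k < n)%N.
  move=> k kn; have : nth 0%N Is k \in iota 0 n by rewrite -(perm_mem IsP) mem_nth ?sIs.
  by rewrite mem_iota.
have TE : forall j : 'I_n, nth 0 T j = mu j.
  by move=> j; rewrite (nth_map (Ordinal n0)) ?size_enum_ord // nth_ord_enum.
have SE' : forall k (kn : (k < n)%N), nth 0 S k = mu (Ordinal (IsLt k kn)).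
  by move=> k kn; rewrite SE (nth_map 0%N) ?sIs // -TE.
have jIs : forall j : 'I_n, exists2 k, (k < n)%N & nth 0 S k = mu j /\ nth 0%N Is k = j.
  move=> j; have jI : (j : nat) \in Is by rewrite (perm_mem IsP) mem_iota /=.
  have kn : (index (j : nat) Is < n)%N by move: (jI); rewrite -index_mem sIs.
  have ni := nth_index 0%N jI.
  exists (index (j : nat) Is) => //; split => //; rewrite (SE' _ kn).
  by congr mu; apply: val_inj => /=.
have le_nth : forall a b, (a <= b)%N -> (b < n)%N -> nth 0 S b <= nth 0 S a.
  move=> a b ab bn; have := @sorted_leq_nth _ (fun x y : R => y <= x) _ _ 0 S sS a b.
  rewrite !inE (perm_size pS) sT; apply.
  - by move=> x y z /= yx zy; apply: le_trans zy yx.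
  - by move=> x /=.
  - by apply: leq_ltn_trans bn.
  - by [].
  - by [].
exists (Ordinal (IsLt 0%N n0)), (Ordinal (IsLt 1%N n1)); split.
- apply/negP => /eqP [] /eqP; rewrite nth_uniq ?sIs //.
- exact: SE'.
- exact: SE'.
- move=> j jj1; have [k kn [Sk Ik]] := jIs j.
  rewrite -Sk; apply: le_nth => //; rewrite lt0n; apply/negP => /eqP k0.
  move: jj1; rewrite k0 in Ik; apply/negP; rewrite negbK; apply/eqP; apply: val_inj => /=.
  by rewrite Ik.
- split.
    move=> j; have [k kn [Sk Ik]] := jIs j; rewrite -Sk; apply: le_nth => //.
      by rewrite -ltnS prednK.
    by rewrite prednK.
  split; first by eexists; apply: SE'; rewrite prednK.
  by apply: le_nth.
Qed.


Lemma dotE n (P : 'M[C]_n) : P \is unitarymx -> forall u v : 'rV_n,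
  dot u v = \sum_j (u *m P^t*) 0 j * conjC ((v *m P^t*) 0 j).
Proof.
move=> Pu u v; rewrite dotmxE.
rewrite -[u in LHS](@mulmxKtV _ _ _ _ u P Pu erefl) -[v in LHS](@mulmxKtV _ _ _ _ v P Pu erefl).
rewrite [(_ *m P)^T]trmx_mul map_mxM mulmxA -(mulmxA _ P) (unitarymxP Pu) mulmx1.
by rewrite !mxE; apply: eq_bigr => j _; rewrite !mxE.
Qed.


Local Notation RC := (real_complex R).

Lemma RC_le (a b : R) : (RC a <= RC b) = (a <= b).
Proof. exact: lecR. Qed.

Lemma sum_le n (F G : 'I_n -> C) (t : 'I_n -> C) :
  (forall j, 0 <= t j) -> (forall j, t j != 0 -> F j <= G j) ->
  \sum_j F j * t j <= \sum_j G j * t j.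
Proof.
move=> t0 FG; apply: ler_sum => j _.
have [->|tj] := eqVneq (t j) 0; first by rewrite !mulr0.
by apply: ler_wpM2r => //; apply: FG.
Qed.

Lemma A1 n (P : 'M[C]_n) (lam : 'I_n -> R) (N : 'rV[C]_n -> C) (c : R) :
  P \is unitarymx ->
  (forall u, N u = \sum_j RC (lam j) * ((u *m P^t*) 0 j * conjC ((u *m P^t*) 0 j))) ->
  (forall j, lam j <= c) -> forall u, N u <= RC c * dot u u.
Proof.
move=> Pu NE lc u; rewrite NE (dotE Pu) mulr_sumr.
by apply: sum_le => [j|j _]; rewrite ?mul_conjC_ge0 // RC_le.
Qed.

Lemma A2 n (P : 'M[C]_n) (lam : 'I_n -> R) (N : 'rV[C]_n -> C) (c : R) :
  P \is unitarymx ->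
  (forall u, N u = \sum_j RC (lam j) * ((u *m P^t*) 0 j * conjC ((u *m P^t*) 0 j))) ->
  (forall j, c <= lam j) -> forall u, RC c * dot u u <= N u.
Proof.
move=> Pu NE lc u; rewrite NE (dotE Pu) mulr_sumr.
by apply: sum_le => [j|j _]; rewrite ?mul_conjC_ge0 // RC_le.
Qed.

Lemma deltaP n (P : 'M[C]_n) j : P \is unitarymx ->
  delta_mx (0:'I_1) j *m P *m P^t* = delta_mx (0:'I_1) j.
Proof. by move=> Pu; rewrite -mulmxA (unitarymxP Pu) mulmx1. Qed.

Lemma A3 n (P : 'M[C]_n) (lam : 'I_n -> R) (N : 'rV[C]_n -> C) (c : R) j1 :
  P \is unitarymx ->
  (forall u, N u = \sum_j RC (lam j) * ((u *m P^t*) 0 j * conjC ((u *m P^t*) 0 j))) ->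
  (forall j, j != j1 -> lam j <= c) -> forall u, dot u (delta_mx (0:'I_1) j1 *m P) = 0 ->
  N u <= RC c * dot u u.
Proof.
move=> Pu NE lc u; rewrite (dotE Pu) deltaP // (bigD1 j1) //= big1; last first.
  by move=> j jj; rewrite [X in conjC X]mxE eqxx /= (negbTE jj) conjC0 mulr0.
rewrite addr0 [X in conjC X]mxE !eqxx conjC1 mulr1 => y0.
rewrite NE (dotE Pu) mulr_sumr.
apply: sum_le => [j|j]; rewrite ?mul_conjC_ge0 //.
have [->|jj] := eqVneq j j1; first by rewrite y0 mul0r eqxx.
by rewrite RC_le; move=> _; apply: lc.
Qed.

Lemma A5 n (P : 'M[C]_n) (lam : 'I_n -> R) (N : 'rV[C]_n -> C) j1 :
  P \is unitarymx ->
  (forall u, N u = \sum_j RC (lam j) * ((u *m P^t*) 0 j * conjC ((u *m P^t*) 0 j))) ->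
  dot (delta_mx (0:'I_1) j1 *m P) (delta_mx (0:'I_1) j1 *m P) = 1 /\ N (delta_mx (0:'I_1) j1 *m P) = RC (lam j1).
Proof.
move=> Pu NE; rewrite NE (dotE Pu) deltaP //; split.
  rewrite (bigD1 j1) //= big1 ?addr0; first by rewrite mxE !eqxx conjC1 mulr1.
  by move=> j jj; rewrite mxE eqxx /= (negbTE jj) conjC0 mulr0.
rewrite (bigD1 j1) //= big1 ?addr0; first by rewrite mxE !eqxx conjC1 !mulr1.
by move=> j jj; rewrite mxE eqxx /= (negbTE jj) conjC0 !mulr0.
Qed.


Lemma sum2 n (F : 'I_n -> C) j1 j2 : j1 != j2 ->
  (forall j, j != j1 -> j != j2 -> F j = 0) -> \sum_j F j = F j1 + F j2.
Proof.
move=> j12 F0; rewrite (bigD1 j1) //= (bigD1 j2) 1?eq_sym //= big1 ?addr0 //.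
by move=> j /andP[jj1 jj2]; apply: F0.
Qed.

Lemma A4 n (P : 'M[C]_n) (lam : 'I_n -> R) (N : 'rV[C]_n -> C) j1 j2 :
  P \is unitarymx ->
  (forall u, N u = \sum_j RC (lam j) * ((u *m P^t*) 0 j * conjC ((u *m P^t*) 0 j))) ->
  j1 != j2 -> lam j2 <= lam j1 -> forall a : 'rV_n,
  exists2 x, x != 0 & dot x a = 0 /\ RC (lam j2) * dot x x <= N x.
Proof.
move=> Pu NE j12 l21 a.
pose b j := conjC ((a *m P^t*) 0 j).
pose d j : 'rV[C]_n := delta_mx (0:'I_1) j.
pose y : 'rV_n := if b j1 == 0 then d j1 else b j2 *: d j1 - b j1 *: d j2.
have yP : y *m P *m P^t* = y by rewrite -mulmxA (unitarymxP Pu) mulmx1.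
have yE : forall j, j != j1 -> j != j2 -> y 0 j = 0.
  move=> j jj1 jj2; rewrite /y; case: ifP => _; rewrite !mxE /= (negbTE jj1) //.
  by rewrite (negbTE jj2) !mulr0 subr0.
exists (y *m P).
  apply/negP => /eqP y0; move: yP; rewrite y0 mul0mx => /esym/rowP.
  rewrite /y; case: ifP => bj1.
    by move=> /(_ j1); rewrite !mxE !eqxx /= => /eqP; rewrite oner_eq0.
  move=> /(_ j2); rewrite !mxE !eqxx /= eq_sym (negbTE j12) mulr0 sub0r mulr1.
  by move=> /eqP; rewrite oppr_eq0 bj1.
split.
  rewrite (dotE Pu) yP (@sum2 _ _ j1 j2) //; last first.
    by move=> j jj1 jj2; rewrite yE // mul0r.
  rewrite -/(b j1) -/(b j2) /y; case: ifP => bj1; rewrite !mxE !eqxx /=.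
    by rewrite (eqP bj1) eq_sym (negbTE j12) !mulr0 mul0r add0r.
  rewrite (negbTE j12) [j2 == j1]eq_sym (negbTE j12) !mulr0 !mulr1 subr0 sub0r.
  by rewrite mulrC mulNr subrr.
rewrite NE (dotE Pu) yP mulr_sumr.
apply: sum_le => [j|j]; rewrite ?mul_conjC_ge0 //.
have [->|jj1] := eqVneq j j1; first by rewrite RC_le.
have [->|jj2] := eqVneq j j2; first by rewrite RC_le.
by rewrite yE // mul0r eqxx.
Qed.


Lemma gfacts n (g : 'M[C]_n) : (1 < n)%N ->
  exists e1 : 'rV_n,
  [/\ dot e1 e1 = 1 /\ dot (e1 *m g^t*) (e1 *m g^t*) = RC (sigmaC g 1 ^+ 2),
    (forall u, dot (u *m g^t*) (u *m g^t*) <= RC (sigmaC g 1 ^+ 2) * dot u u) /\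
    (forall u, RC (sigmaC g n ^+ 2) * dot u u <= dot (u *m g^t*) (u *m g^t*)),
    (forall u, dot u e1 = 0 -> dot (u *m g^t*) (u *m g^t*) <= RC (sigmaC g 2 ^+ 2) * dot u u),
    (forall a, exists2 x, x != 0 & dot x a = 0 /\
        RC (sigmaC g 2 ^+ 2) * dot x x <= dot (x *m g^t*) (x *m g^t*)) &
    [/\ 0 <= sigmaC g n, sigmaC g n <= sigmaC g 2, sigmaC g 2 <= sigmaC g 1 &
        (g \in unitmx -> 0 < sigmaC g n)]].
Proof.
move=> n1.
have [P [lam [Pu l0 pS NE]]] := spec g.
set S := singular_values g.
have pS' : perm_eq S [seq Num.sqrt (lam j) | j <- enum 'I_n].
  by rewrite /S /singular_values perm_sort.
have sS : sorted (fun x y : R => y <= x) S.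
  by apply: sort_sorted => x y; rewrite orbC le_total.
have [j1 [j2 [j12 S0 S1 Lj [Ld [[jd Sd] S10]]]]] := sorted_data n1 pS' sS.
have s1E : sigmaC g 1 = Num.sqrt (lam j1) by [].
have s2E : sigmaC g 2 = Num.sqrt (lam j2) by [].
have sdE : sigmaC g n = Num.sqrt (lam jd) by [].
rewrite s1E s2E sdE !sqr_sqrtr //.
have Lj' : forall j, j != j1 -> lam j <= lam j2.
  by move=> j jj; rewrite -ler_sqrt // -S1; apply: Lj.
have L21 : lam j2 <= lam j1 by rewrite -ler_sqrt // -S0 -S1.
have Lall : forall j, lam j <= lam j1.
  move=> j; have [->//|jj] := eqVneq j j1; exact: le_trans (Lj' _ jj) L21.
have Ld' : forall j, lam jd <= lam j.
  by move=> j; rewrite -ler_sqrt // -Sd; apply: Ld.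
exists (delta_mx (0:'I_1) j1 *m P); split.
- exact: A5 Pu NE.
- by split; [apply: A1 Pu NE _ | apply: A2 Pu NE _].
- exact: A3 Pu NE _.
- exact: A4 Pu NE j12 L21.
- split.
  + exact: sqrtr_ge0.
  + by rewrite ler_sqrt.
  + by rewrite ler_sqrt.
  + move=> gu; rewrite sqrtr_gt0.
    have [_ N1] := A5 jd Pu NE.
    rewrite -ltcR -N1 dnorm_gt0; apply/negP => /eqP h.
    have gtu : g^t* \in unitmx by rewrite map_unitmx unitmx_tr.
    have h2 : delta_mx (0:'I_1) jd *m P = 0 by rewrite -(mulmxK gtu (_ *m P)) h mul0mx.
    have := deltaP jd Pu; rewrite h2 mul0mx => /esym/rowP/(_ jd).
    by rewrite !mxE !eqxx /= => /eqP; rewrite oner_eq0.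
Qed.


Lemma dot_shift n (x e : 'rV[C]_n) (w : 'M[C]_n) :
  dot (x *m w^t*) e = dot x (e *m w).
Proof. by rewrite !dotmxE [(e *m w)^T]trmx_mul map_mxM mulmxA. Qed.

Lemma prodT n (w1 w2 : 'M[C]_n) (u : 'rV_n) :
  u *m (w1 *m w2)^t* = u *m w2^t* *m w1^t*.
Proof. by rewrite trmx_mul map_mxM mulmxA. Qed.

Lemma RCM (a b : R) : RC (a * b) = RC a * RC b.
Proof. exact: rmorphM. Qed.

Lemma sq_le (a b : R) : 0 <= a -> 0 <= b -> RC (a ^+ 2) <= RC (b ^+ 2) -> a <= b.
Proof. by move=> a0 b0; rewrite RC_le ler_sqr // nnegrE. Qed.

Lemma mainC d (w1 w2 : 'M[C]_d) : (1 < d)%N -> w1 \in unitmx -> w2 \in unitmx ->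
 [/\ sigmaC w1 1 * sigmaC w2 d <= sigmaC (w1 *m w2) 1,
     sigmaC w1 d * sigmaC w2 1 <= sigmaC (w1 *m w2) 1,
     sigmaC (w1 *m w2) 2 <= sigmaC w1 2 * sigmaC w2 1 &
     sigmaC (w1 *m w2) 2 <= sigmaC w1 1 * sigmaC w2 2].
Proof.
move=> d1 u1 u2.
have ug : w1 *m w2 \in unitmx by rewrite unitmx_mul u1 u2.
have [e1 [[E11 E12] [U1 L1] O1 F1 [P1 P2 P3 P4]]] := gfacts w1 d1.
have [e2 [[E21 E22] [U2 L2] O2 F2 [Q1 Q2 Q3 Q4]]] := gfacts w2 d1.
have [e3 [[E31 E32] [U3 L3] O3 F3 [R1 R2 R3 R4]]] := gfacts (w1 *m w2) d1.
have := P4 u1; have := Q4 u2; have := R4 ug => R5 Q5 P5.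
have a10 : 0 <= sigmaC w1 1 := le_trans (le_trans P1 P2) P3.
have a20 : 0 <= sigmaC w1 2 := le_trans P1 P2.
have b10 : 0 <= sigmaC w2 1 := le_trans (le_trans Q1 Q2) Q3.
have b20 : 0 <= sigmaC w2 2 := le_trans Q1 Q2.
have p10 : 0 <= sigmaC (w1 *m w2) 1 := le_trans (le_trans R1 R2) R3.
have p20 : 0 <= sigmaC (w1 *m w2) 2 := le_trans R1 R2.
have RC0 : forall x : R, 0 <= x -> 0 <= RC (x ^+ 2).
  by move=> x x0; rewrite -(rmorph0 (real_complex R)) RC_le exprn_ge0.
split.
- apply: (sq_le (mulr_ge0 a10 Q1) p10).
  pose u := e1 *m invmx (w2^t*).
  have gtu : w2^t* \in unitmx by rewrite map_unitmx unitmx_tr.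
  have uw : u *m w2^t* = e1 by rewrite /u mulmxKV.
  have h1 := U3 u; rewrite prodT uw E12 in h1.
  have h2 := L2 u; rewrite uw E11 in h2.
  rewrite exprMn rmorphM /=.
  apply: le_trans (ler_wpM2r (RC0 _ Q1) h1) _.
  rewrite -mulrA [_ * RC _]mulrC.
  by apply: le_trans (ler_wpM2l (RC0 _ p10) h2) _; rewrite mulr1.
- apply: (sq_le (mulr_ge0 P1 b10) p10).
  have h1 := U3 e2; rewrite E21 mulr1 prodT in h1.
  have h2 := L1 (e2 *m w2^t*); rewrite E22 in h2.
  by rewrite exprMn rmorphM /=; apply: le_trans h2 h1.
- apply: (sq_le p20 (mulr_ge0 a20 b10)).
  have [x x0 [xa h1]] := F3 (e1 *m w2).
  rewrite -dot_shift in xa.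
  have h2 := O1 _ xa; rewrite -prodT in h2.
  have h3 := U2 x.
  have xx : 0 < dot x x by rewrite dnorm_gt0.
  rewrite -(ler_pM2r xx); apply: le_trans h1 _; apply: le_trans h2 _.
  rewrite exprMn (RCM (sigmaC w1 2 ^+ 2)) -mulrA.
  by apply: ler_wpM2l; [exact: RC0 _ a20 | exact: h3].
- apply: (sq_le p20 (mulr_ge0 a10 b20)).
  have [x x0 [xa h1]] := F3 e2.
  have h2 := U1 (x *m w2^t*); rewrite -prodT in h2.
  have h3 := O2 _ xa.
  have xx : 0 < dot x x by rewrite dnorm_gt0.
  rewrite -(ler_pM2r xx); apply: le_trans h1 _; apply: le_trans h2 _.
  rewrite exprMn (RCM (sigmaC w1 1 ^+ 2)) -mulrA.
  by apply: ler_wpM2l; [exact: RC0 _ a10 | exact: h3].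
Qed.


Lemma arith (p1 p2 u v r t : R) : 0 < p2 -> 0 <= u -> 0 < v -> 0 <= r -> 0 < t ->
  u <= p1 -> p2 <= v -> r <= t -> u / v * (r / t) <= p1 / p2.
Proof.
move=> p20 u0 v0 r0 t0 up pv rt.
apply: (@le_trans _ _ (u / v * 1)).
  by apply: ler_wpM2l; [rewrite divr_ge0 // ltW | rewrite ler_pdivrMr // mul1r].
rewrite mulr1; apply: ler_pM => //; first by rewrite invr_ge0 ltW.
by rewrite lef_pV2 ?posrE // (lt_le_trans p20).
Qed.

Lemma alg1 (ad a1 a2 b1 b2 : R) : a1 != 0 -> a2 != 0 -> b2 != 0 ->
  ad ^+ 2 / a1 ^+ 2 * (a1 / a2) * (b1 / b2) = (ad * b1) / (a1 * b2) * (ad / a2).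
Proof. by move=> *; field; apply/and3P. Qed.

Lemma alg2 (a1 a2 b1 b2 bd : R) : a2 != 0 -> b1 != 0 -> b2 != 0 ->
  bd ^+ 2 / b1 ^+ 2 * (a1 / a2) * (b1 / b2) = (a1 * bd) / (a2 * b1) * (bd / b2).
Proof. by move=> *; field; apply/and3P. Qed.

Lemma caseC d (w1 w2 : 'M[C]_d) : (1 < d)%N -> w1 \in unitmx -> w2 \in unitmx ->
  forall w : 'M[C]_d, w = w1 \/ w = w2 ->
       sigmaC (w1 *m w2) 1 / sigmaC (w1 *m w2) 2 >=
       (sigmaC w d ^+ 2 / sigmaC w 1 ^+ 2)
         * (sigmaC w1 1 / sigmaC w1 2) * (sigmaC w2 1 / sigmaC w2 2).
Proof.
move=> d1 u1 u2 w hw.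
have ug : w1 *m w2 \in unitmx by rewrite unitmx_mul u1 u2.
have [? [_ _ _ _ [P1 P2 P3 P4]]] := gfacts w1 d1.
have [? [_ _ _ _ [Q1 Q2 Q3 Q4]]] := gfacts w2 d1.
have [? [_ _ _ _ [R1 R2 R3 R4]]] := gfacts (w1 *m w2) d1.
have P5 := P4 u1; have Q5 := Q4 u2; have R5 := R4 ug.
have [M1 M2 M3 M4] := mainC d1 u1 u2.
have a2 : 0 < sigmaC w1 2 := lt_le_trans P5 P2.
have a1 : 0 < sigmaC w1 1 := lt_le_trans a2 P3.
have b2 : 0 < sigmaC w2 2 := lt_le_trans Q5 Q2.
have b1 : 0 < sigmaC w2 1 := lt_le_trans b2 Q3.
have p2 : 0 < sigmaC (w1 *m w2) 2 := lt_le_trans R5 R2.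
case: hw => [->|->].
- rewrite (@alg1 (sigmaC w1 d) (sigmaC w1 1) (sigmaC w1 2) (sigmaC w2 1) (sigmaC w2 2)
    (lt0r_neq0 a1) (lt0r_neq0 a2) (lt0r_neq0 b2)).
  exact: (arith p2 (mulr_ge0 P1 (ltW b1)) (mulr_gt0 a1 b2) P1 a2 M2 M4 P2).
- rewrite (@alg2 (sigmaC w1 1) (sigmaC w1 2) (sigmaC w2 1) (sigmaC w2 2) (sigmaC w2 d)
    (lt0r_neq0 a2) (lt0r_neq0 b1) (lt0r_neq0 b2)).
  exact: (arith p2 (mulr_ge0 (ltW a1) Q1) (mulr_gt0 a2 b1) Q1 b2 M1 M3 Q2).
Qed.

End S.

Unset Implicit Arguments.
Set Strict Implicit.

Theorem lemma2p4 (R : realType) (d : nat) : (1 < d)%N ->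
  (* K = R *)
  (forall (w1 w2 : 'M[R]_d), w1 \in unitmx -> w2 \in unitmx ->
     forall w : 'M[R]_d, w = w1 \/ w = w2 ->
       sigmaR (w1 *m w2) 1 / sigmaR (w1 *m w2) 2 >=
       (sigmaR w d ^+ 2 / sigmaR w 1 ^+ 2)
         * (sigmaR w1 1 / sigmaR w1 2) * (sigmaR w2 1 / sigmaR w2 2)) /\
  (* K = C *)
  (forall (w1 w2 : 'M[R[i]]_d), w1 \in unitmx -> w2 \in unitmx ->
     forall w : 'M[R[i]]_d, w = w1 \/ w = w2 ->
       sigmaC (w1 *m w2) 1 / sigmaC (w1 *m w2) 2 >=
       (sigmaC w d ^+ 2 / sigmaC w 1 ^+ 2)
         * (sigmaC w1 1 / sigmaC w1 2) * (sigmaC w2 1 / sigmaC w2 2)).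
Proof.
move=> d1; split; last by move=> w1 w2; apply: (@caseC R d w1 w2 d1).
move=> w1 w2 u1 u2 w hw.
rewrite /sigmaR.
have -> : map_mx (fun x : R => (x%:C)%C) (w1 *m w2) =
  map_mx (real_complex R) w1 *m map_mx (real_complex R) w2 by rewrite map_mxM.
have h := @caseC R d (map_mx (real_complex R) w1) (map_mx (real_complex R) w2) d1.
rewrite !map_unitmx in h.
apply: (h u1 u2 (map_mx (real_complex R) w)).
by case: hw => [->|->]; [left | right].
Qed.
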